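(* Let $k\ge r\ge3$ and $p,t\ge0$ be integers and let $\pi\in\mathbb{C}_{<}(k,r|p,t)$ be such that $\pi^{(2)}_p=2t+2$ and $\pi^{(2)}_p$ is of starting type $s_3$. Let $p_1$ be the smallest integer with $1\le p_1\le p$ such that $\pi^{(2)}_{p_1}=\pi^{(2)}_{p}+4(p-p_1)$ and $\pi^{(2)}_{p},\pi^{(2)}_{p-1},\dots,\pi^{(2)}_{p_1}$ are all of the same starting type. Then the integer $\pi^{(2)}_{p_1}+4$ occurs at most once as a part of $\pi$.
   Context: A partition $\pi=(\pi_1,\dots,\pi_\ell)$ is a finite non-increasing sequence of positive integers; ''$a$ occurs in $\pi$'' means $a=\pi_i$ for some $i$. Göllnitz–Gordon marking: $GG(\pi)$ assigns a positive integer (mark) to each part, processing the parts from smallest to largest; $\pi_i$ receives the smallest positive integer different from the marks of all parts $\pi_g$ with $g>i$ and $\pi_i-\pi_g\le 2$, where $\pi_i-\pi_g<2$ is required when $\pi_i$ is odd. An ''$r$-marked part $a$'' is a part equal to $a$ with mark $r$. $N_i(\pi)$ is the number of parts with mark $i$; $\pi^{(i)}_1\ge\dots\ge\pi^{(i)}_{N_i(\pi)}$ are the parts with mark $i$, with $\pi^{(i)}_0=+\infty$, $\pi^{(i)}_{N_i(\pi)+1}=-\infty$. $\mathbb{C}(k,r)$: partitions with (i) no odd part repeated; (ii) $\pi_i\ge\pi_{i+k-1}+2$ for $1\le i\le\ell-k+1$, strict if $\pi_i$ even; (iii) at most $r-1$ parts $\le 2$. Starting types: for $\pi\in\mathbb{C}(k,r)$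 with $N_2=N_2(\pi)\ge1$, let $l$ be the largest integer in $\{0,\dots,N_2\}$ such that no odd part of $\pi$ is $\ge\pi^{(2)}_l$; for $l<i\le N_2$, $\pi^{(2)}_i$ has type $s_{-1}$. For $b=1,\dots,l$ in increasing order, type and auxiliary $\sigma_b$: for $b=1$: Case 1: 1-marked part $\pi^{(2)}_1-1$ exists and $\pi^{(2)}_1+2$ does not occur: type $s_0$, $\sigma_1=\pi^{(2)}_1-1$; Case 2: 1-marked $\pi^{(2)}_1-2$ exists and $\pi^{(2)}_1+2$ does not occur: type $s_1$, $\sigma_1=\pi^{(2)}_1-2$; Case 3: 1-marked $\pi^{(2)}_1+2$ exists: type $s_2$, $\sigma_1=\pi^{(2)}_1+2$; Case 4: 1-marked $\pi^{(2)}_1$ exists: type $s_3$, $\sigma_1=\pi^{(2)}_1$. For $2\le b\le l$: Case 1: 1-marked $\pi^{(2)}_b-1$ exists and, if a 1-marked $\pi^{(2)}_b+2$ exists, $\sigma_{b-1}=\pi^{(2)}_b+2$: type $s_0$, $\sigma_b=\pi^{(2)}_b-1$; Case 2: same with $\pi^{(2)}_b-2$: type $s_1$, $\sigma_b=\pi^{(2)}_b-2$; Case 3: 1-marked $\pi^{(2)}_b+2$ exists and $\sigma_{b-1}\ne\pi^{(2)}_b+2$: type $s_2$, $\sigma_b=\pi^{(2)}_b+2$; Case 4: 1-marked $\pi^{(2)}_b$ exists: type $s_3$, $\sigma_b=\pi^{(2)}_b$. $\mathbb{C}_{<}(k,r|p,t)$: the set of $\pi\in\mathbb{C}(k,r)$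 such that (1) no odd part is $\ge 2t+1$; (2) $\pi^{(2)}_{p+1}<2t+1<\pi^{(2)}_p$ (in particular $p\le N_2(\pi)$); (3) if $\pi^{(2)}_p=2t+2$ then it is of starting type $s_2$ or $s_3$; (4) if $\pi^{(2)}_{p+1}=2t$ then it is of starting type $s_0$ or $s_1$. The index $p_1$ in the claim is what the paper calls the first starting cluster index of $\pi$. *)

(* Defs.v *)
(* Partitions are sequences of nats, listed non-increasingly:
   pi = [:: pi_1; pi_2; ...; pi_l].  Indices in the paper are 1-based. *)
From mathcomp Require Import all_boot.
Set Implicit Arguments.
Unset Strict Implicit.
Unset Printing Implicit Defensive.

Definition is_partition (pi : seq nat) : bool :=
  sorted geq pi && all (fun x => 0 < x) pi.

Definition part (pi : seq nat) (i : nat) : nat := nth 0 pi i.-1.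

Definition smallest_pos_not_in (L : seq nat) : nat :=
  nth 0 [seq n <- iota 1 (size L).+1 | n \notin L] 0.

Definition gg_close (x y : nat) : bool :=
  if odd x then x - y < 2 else x - y <= 2.

(* GG marking.  For a partition written non-increasingly, the mark of the
   head part x depends only on the marks of the later (smaller) parts;
   gg_marks pi is the list of marks, aligned with pi. *)
Fixpoint gg_marks (pi : seq nat) : seq nat :=
  match pi with
  | [::] => [::]
  | x :: s =>
      let ms := gg_marks s in
      smallest_pos_not_in
        [seq z.2 | z <- zip s ms & gg_close x z.1] :: ms
  end.

Definition marked_parts (i : nat) (pi : seq nat) : seq nat :=
  [seq z.1 | z <- zip pi (gg_marks pi) & z.2 == i].

Definition Nmark (i : nat) (pi : seq nat) : nat := size (marked_parts i pi).

(* pi^(2)_j for 1 <= j <= N_2(pi) (the conventions pi^(2)_0 = +oo and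
   pi^(2)_(N_2+1) = -oo are handled explicitly where they matter) *)
Definition pi2 (pi : seq nat) (j : nat) : nat := nth 0 (marked_parts 2 pi) j.-1.

Definition one_marked (pi : seq nat) (a : nat) : bool :=
  (a, 1) \in zip pi (gg_marks pi).

Definition occurs (pi : seq nat) (a : nat) : bool := a \in pi.

Definition in_C (k r : nat) (pi : seq nat) : Prop :=
  is_partition pi /\
  (forall x, odd x -> count_mem x pi <= 1) /\
  (forall i, 1 <= i -> i + k - 1 <= size pi ->
     if odd (part pi i) then part pi (i + k - 1) + 2 <= part pi i
     else part pi (i + k - 1) + 2 < part pi i) /\
  count (fun x => x <= 2) pi <= r - 1.

(* starting types; s_none is a default that is used only if no case applies *)
Inductive stype := s_m1 | s_0 | s_1 | s_2 | s_3 | s_none.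

(* l : the largest integer in {0,...,N_2} such that no odd part of pi is
   >= pi^(2)_l  (with pi^(2)_0 = +oo, so l = 0 always qualifies) *)
Definition no_odd_above (pi : seq nat) (j : nat) : bool :=
  (j == 0) || all (fun x => odd x ==> (x < pi2 pi j)) pi.

Definition start_l (pi : seq nat) : nat :=
  \max_(0 <= j < (Nmark 2 pi).+1 | no_odd_above pi j) j.

(* one step of the starting-type recursion: given sigma_{b-1}
   (None when b = 1) and y = pi^(2)_b, returns (type, sigma_b).
   The cases are tried in the order 1,2,3,4 of the paper. *)
Definition stype_step (pi : seq nat) (prev : option nat) (y : nat)
  : stype * nat :=
  match prev with
  | None =>
      if one_marked pi (y - 1) && ~~ occurs pi (y + 2) then (s_0, y - 1)
      else if one_marked pi (y - 2) && ~~ occurs pi (y + 2) then (s_1, y - 2)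
      else if one_marked pi (y + 2) then (s_2, y + 2)
      else if one_marked pi y then (s_3, y)
      else (s_none, 0)
  | Some sg =>
      let C := one_marked pi (y + 2) ==> (sg == y + 2) in
      if one_marked pi (y - 1) && C then (s_0, y - 1)
      else if one_marked pi (y - 2) && C then (s_1, y - 2)
      else if one_marked pi (y + 2) && (sg != y + 2) then (s_2, y + 2)
      else if one_marked pi y then (s_3, y)
      else (s_none, 0)
  end.

Fixpoint stypes_aux (pi : seq nat) (prev : option nat) (ys : seq nat)
  : seq stype :=
  match ys with
  | [::] => [::]
  | y :: ys' =>
      let ts := stype_step pi prev y in
      ts.1 :: stypes_aux pi (Some ts.2) ys'
  end.

Definition start_type (pi : seq nat) (b : nat) : stype :=
  if b <= start_l pi then
    nth s_none (stypes_aux pi None (take (start_l pi) (marked_parts 2 pi))) b.-1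
  else s_m1.

Definition in_Clt (k r p t : nat) (pi : seq nat) : Prop :=
  in_C k r pi /\
  (forall x, x \in pi -> odd x -> x < 2 * t + 1) /\
  (* (2) pi^(2)_{p+1} < 2t+1 < pi^(2)_p, with pi^(2)_0 = +oo,
         pi^(2)_{N_2+1} = -oo; in particular p <= N_2 *)
  p <= Nmark 2 pi /\
  (0 < p -> 2 * t + 1 < pi2 pi p) /\
  (p + 1 <= Nmark 2 pi -> pi2 pi (p + 1) < 2 * t + 1) /\
  (0 < p -> pi2 pi p = 2 * t + 2 ->
     start_type pi p = s_2 \/ start_type pi p = s_3) /\
  (p + 1 <= Nmark 2 pi -> pi2 pi (p + 1) = 2 * t ->
     start_type pi (p + 1) = s_0 \/ start_type pi (p + 1) = s_1).

(* Main.v *)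
Require Import Defs.
From mathcomp Require Import all_boot.
From mathcomp Require Import zify.
Set Implicit Arguments. Unset Strict Implicit. Unset Printing Implicit Defensive.

Lemma spn_props (L : seq nat) :
  [/\ 0 < smallest_pos_not_in L, smallest_pos_not_in L \notin L &
      forall v, 0 < v < smallest_pos_not_in L -> v \in L].
Proof.
rewrite /smallest_pos_not_in.
have memF : forall v, v \in [seq n <- iota 1 (size L).+1 | n \notin L] =
   (v \notin L) && (0 < v < (size L).+2).
  by move=> v; rewrite mem_filter mem_iota add1n.
have hs : sorted ltn [seq n <- iota 1 (size L).+1 | n \notin L].
  by apply: sorted_filter; [exact: ltn_trans | exact: iota_ltn_sorted].
move: memF hs.
case: [seq n <- iota 1 (size L).+1 | n \notin L] => [|n0 F] memF hs.
  have : {subset iota 1 (size L).+1 <= L}.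
    move=> v hv; apply/negPn/negP => hvL.
    have := memF v; rewrite in_nil hvL /=; move: hv; rewrite mem_iota add1n => -> //.
  by move/(uniq_leq_size (iota_uniq _ _)); rewrite size_iota ltnn.
have := memF n0; rewrite inE eqxx /= => /esym/andP[hn0 /andP[h1 h2]].
split => // v /andP[hv1 hv2].
apply/negPn/negP => hvL.
have := memF v; rewrite hvL hv1 /= (leq_trans hv2 (ltnW h2)) inE => /orP[/eqP E|hvF].
  by rewrite E ltnn in hv2.
have := order_path_min ltn_trans hs => /allP /(_ v hvF).
by rewrite ltnNge (ltnW hv2).
Qed.

Lemma size_gg pi : size (gg_marks pi) = size pi.
Proof. by elim: pi => //= x s ->. Qed.

Lemma gg_drop pi i : gg_marks (drop i pi) = drop i (gg_marks pi).
Proof. by elim: pi i => [|x s IH] [|i] //=. Qed.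

Definition mk pi i := nth 0 (gg_marks pi) i.

Lemma mk_head pi i : i < size pi -> mk pi i = smallest_pos_not_in
  [seq z.2 | z <- zip (drop i.+1 pi) (drop i.+1 (gg_marks pi)) & gg_close (nth 0 pi i) z.1].
Proof.
move=> hi; have := gg_drop pi i.
rewrite (drop_nth 0 hi) (@drop_nth _ 0 i) ?size_gg //= gg_drop.
by case=> ->.
Qed.

Lemma mem_L pi i v : i < size pi ->
  (v \in [seq z.2 | z <- zip (drop i.+1 pi) (drop i.+1 (gg_marks pi)) & gg_close (nth 0 pi i) z.1])
  <-> (exists j, [/\ i < j < size pi, gg_close (nth 0 pi i) (nth 0 pi j) & mk pi j = v]).
Proof.
move=> hi; have hsz : size (drop i.+1 pi) = size (drop i.+1 (gg_marks pi)) by rewrite !size_drop size_gg.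
split.
  case/mapP => z; rewrite mem_filter => /andP[hc /(nthP (0,0))[k]].
  rewrite size_zip hsz minnn size_drop => hk.
  rewrite nth_zip // !nth_drop => Ez Ev.
  exists (i.+1 + k); split.
  - rewrite size_gg in hk; apply/andP; split; lia.
  - by rewrite -Ez in hc.
  - by rewrite Ev -Ez.
case=> j [/andP[hij hj] hc hm].
apply/mapP; exists (nth 0 pi j, mk pi j); last by rewrite hm.
rewrite mem_filter /= hc /=.
apply/(nthP (0,0)); exists (j - i.+1).
  rewrite size_zip hsz minnn size_drop size_gg; lia.
rewrite nth_zip // !nth_drop subnKC //.
Qed.

Lemma mk_props pi i : i < size pi ->
  [/\ 0 < mk pi i,
      forall j, i < j < size pi -> gg_close (nth 0 pi i) (nth 0 pi j) -> mk pi j != mk pi i &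
      forall v, 0 < v < mk pi i -> exists j, [/\ i < j < size pi,
           gg_close (nth 0 pi i) (nth 0 pi j) & mk pi j = v]].
Proof.
move=> hi; have [h1 h2 h3] := spn_props
  [seq z.2 | z <- zip (drop i.+1 pi) (drop i.+1 (gg_marks pi)) & gg_close (nth 0 pi i) z.1].
rewrite -mk_head // in h1 h2 h3.
split => //.
  move=> j hj hc; apply/eqP => E; move/negP: h2; apply.
  by apply/(@mem_L pi i _ hi); exists j.
by move=> v hv; apply/(@mem_L pi i _ hi); apply: h3.
Qed.

Lemma inZP pi a b : (a, b) \in zip pi (gg_marks pi) <->
  exists i, [/\ i < size pi, nth 0 pi i = a & mk pi i = b].
Proof.
have hsz : size pi = size (gg_marks pi) by rewrite size_gg.
split.
  case/(nthP (0,0)) => i; rewrite size_zip -hsz minnn nth_zip // => hi [E1 E2].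
  by exists i.
case=> i [hi E1 E2]; apply/(nthP (0,0)); exists i.
  by rewrite size_zip -hsz minnn.
by rewrite nth_zip // E1 -E2.
Qed.

Lemma close_refl x : gg_close x x.
Proof. by rewrite /gg_close subnn; case: odd. Qed.

Lemma close_even x z : ~~ odd x -> gg_close x z = (x - z <= 2).
Proof. by rewrite /gg_close => /negbTE ->. Qed.

Lemma count2 (s : seq nat) v : 1 < count_mem v s ->
  exists a b, [/\ a < b < size s, nth 0 s a = v & nth 0 s b = v].
Proof.
elim: s => [|x s IH] //=.
case: eqP => [->|_] /= hc.
  have hv : v \in s by rewrite -has_pred1 has_count; move: hc; rewrite addnC addn1 ltnS.
  idtac.
  exists 0, (index v s).+1; split => //=; last by rewrite nth_index.
  by rewrite ltnS index_mem.
have [a [b [hab Ea Eb]]] := IH hc.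
by exists a.+1, b.+1; split => //=; rewrite !ltnS.
Qed.

Lemma stypes_nth pi prev ys i : i < size ys ->
  exists prev', nth s_none (stypes_aux pi prev ys) i = (stype_step pi prev' (nth 0 ys i)).1.
Proof.
elim: ys prev i => [|y ys IH] prev [|i] //= hi.
  by exists prev.
exact: IH.
Qed.

Lemma step_s3 pi prev y : (stype_step pi prev y).1 = s_3 -> one_marked pi y.
Proof. by case: prev => [sg|] /=; do 3 (case: ifP => //= _); case: ifP. Qed.

Lemma step_s3' pi prev y : ~~ one_marked pi (y-1) -> ~~ one_marked pi (y-2) ->
  ~~ one_marked pi (y+2) -> one_marked pi y -> (stype_step pi prev y).1 = s_3.
Proof.
move=> /negbTE h1 /negbTE h2 /negbTE h3 h4; case: prev => [sg|] /=; by rewrite h1 h2 h3 h4.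
Qed.

Lemma st_nth pi b : 0 < b <= start_l pi -> b <= Nmark 2 pi ->
  exists prev, start_type pi b = (stype_step pi prev (pi2 pi b)).1.
Proof.
move=> /andP[hb hl] hN; rewrite /start_type hl.
have [|prev E] := @stypes_nth pi None (take (start_l pi) (marked_parts 2 pi)) b.-1.
  rewrite size_take_min; move: hN; rewrite /Nmark; lia.
by exists prev; rewrite E nth_take //; lia.
Qed.

Lemma szM pi : size (marked_parts 2 pi) = Nmark 2 pi.
Proof. by []. Qed.
Ltac slia := (try rewrite !szM); repeat match goal with H : is_true (odd _) |- _ => clear H | H : is_true (~~ odd _) |- _ => clear H | H : is_true (_ != _) |- _ => clear H end; repeat match goal with H : context[size (marked_parts 2 ?q)] |- _ => rewrite szM in H end; lia.

Theorem proposition2p7 (k r p t : nat) (pi : seq nat) (p1 : nat) :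
  3 <= r -> r <= k ->
  in_Clt k r p t pi ->
  0 < p -> pi2 pi p = 2 * t + 2 ->
  start_type pi p = s_3 ->
  1 <= p1 <= p ->
  pi2 pi p1 = pi2 pi p + 4 * (p - p1) ->
  (forall j, p1 <= j <= p -> start_type pi j = start_type pi p) ->
  (forall q, 1 <= q < p1 ->
     ~ (pi2 pi q = pi2 pi p + 4 * (p - q) /\
        (forall j, q <= j <= p -> start_type pi j = start_type pi p))) ->
  count_mem (pi2 pi p1 + 4) pi <= 1.
Proof.
move=> hr hrk [[Hpart [Hoddrep [Hii Hiii]]] [Hodd [HpN [Hp2 [Hp3' [H3 H4]]]]]] hp0 Hpp Hst
  /andP[hp1 hp1p] Hpp1 Hsame Hmin.
clear Hii Hiii Hoddrep H3 H4 Hp3' Hp2 hr hrk.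
have [dd Edd] : exists dd, p = p1 + dd by exists (p - p1); lia.
subst p; rename dd into D.
rewrite addKn in Hpp1.
destruct p1 as [|p0]; first by [].
clear hp1 hp1p.
set y := pi2 pi p0.+1.
have Ey : y = 2 * (t + 1 + 2 * D) by rewrite /y Hpp1 Hpp; slia.
have Hs : forall i j, i <= j -> j < size pi -> nth 0 pi j <= nth 0 pi i.
  move=> i j hij hj; case/andP: Hpart => hs _.
  apply: (sorted_leq_nth (leT := geq) _ _ 0 hs) => //; rewrite ?inE; try slia.
    by move=> a b c h1 h2; apply: leq_trans h2 h1.
  by move=> a; apply: leqnn.
have oy1 : odd (y + 1) by rewrite Ey oddD oddM.
have oy3 : odd (y + 3) by rewrite Ey oddD oddM.
have ey2 : ~~ odd (y + 2) by rewrite Ey oddD oddM.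
have ey4 : ~~ odd (y + 4) by rewrite Ey oddD oddM.
have ey6 : ~~ odd (y + 6) by rewrite Ey oddD oddM.
have Hno : forall j, j < size pi -> nth 0 pi j <> y + 1 /\ nth 0 pi j <> y + 3.
  move=> j hj; split => E; have := Hodd (nth 0 pi j) (mem_nth 0 hj); rewrite E.
    by move=> /(_ oy1); slia.
  by move=> /(_ oy3); slia.
have memM : forall v, v \in (marked_parts 2 pi) -> exists i, [/\ i < size pi, nth 0 pi i = v & mk pi i = 2].
  move=> v /mapP[z]; rewrite mem_filter => /andP[/eqP E2 hz] ->.
  by case: z E2 hz => a b /= -> hz; apply/inZP.
have Mmem : forall i, i < size pi -> mk pi i = 2 -> nth 0 pi i \in (marked_parts 2 pi).
  move=> i hi h2; apply/mapP; exists (nth 0 pi i, 2) => //.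
  by rewrite mem_filter eqxx /=; apply/inZP; exists i.
have Hl : p0.+1 + D <= start_l pi by move: Hst; rewrite /start_type; case: ifP.
have yM : y \in (marked_parts 2 pi) by rewrite /y /pi2 mem_nth //; slia.
have [i2 [hi2 Ei2 Mi2]] := memM _ yM.
have [i1 [hi1 Ei1 Mi1]] : exists i, [/\ i < size pi, nth 0 pi i = y & mk pi i = 1].
  apply/inZP.
  have h1 : 0 < p0.+1 <= start_l pi by slia.
  have h2 : p0.+1 <= Nmark 2 pi by slia.
  have [prev E] := @st_nth pi p0.+1 h1 h2.
  apply: (step_s3 (prev := prev)); rewrite -E Hsame //; slia.
have H3m : forall j, j < size pi -> nth 0 pi j = y + 2 -> 3 <= mk pi j.
  move=> j hj Ej; have [m0 mne _] := mk_props hj.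
  have hij : forall i, i < size pi -> nth 0 pi i = y -> j < i.
    move=> i hi Ei; rewrite ltnNge; apply/negP => hle; have := Hs _ _ hle hj; slia.
  have c : forall i, nth 0 pi i = y -> gg_close (nth 0 pi j) (nth 0 pi i).
    by move=> i ->; rewrite Ej close_even //; slia.
  have := mne i1; rewrite hij // hi1 c // Mi1 => /(_ isT isT) /eqP n1.
  have := mne i2; rewrite hij // hi2 c // Mi2 => /(_ isT isT) /eqP n2.
  slia.
have Hlift : forall d v, d < size pi -> nth 0 pi d = y + 4 -> 0 < v < mk pi d -> v <= 2 ->
    exists j, [/\ j < size pi, nth 0 pi j = y + 4 & mk pi j = v].
  move=> d v hd Ed hv hv2; have [_ _ h3] := mk_props hd.
  have [j [/andP[hdj hj] hc hm]] := h3 v hv.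
  exists j; split => //.
  have hle := Hs d j (ltnW hdj) hj.
  rewrite Ed close_even // in hc; rewrite Ed in hle.
  have [n1 n3] := Hno j hj.
  case: (boolP (nth 0 pi j == y + 2)) => [/eqP e2|/eqP ne2].
    have := H3m j hj e2; slia.
  slia.
rewrite leqNgt; apply/negP => Hc.
have [a [b [/andP[hab hb] Ea Eb]]] := count2 Hc.
have ha : a < size pi by slia.
have [c1 [hc1 Ec1 Mc1]] : exists j, [/\ j < size pi, nth 0 pi j = y + 4 & mk pi j = 1].
  have [m0 _ _] := mk_props ha.
  case: (boolP (mk pi a == 1)) => [/eqP h|/eqP h]; first by exists a.
  apply: (Hlift a) => //; slia.
have [c2 [hc2 Ec2 Mc2]] : exists j, [/\ j < size pi, nth 0 pi j = y + 4 & mk pi j = 2].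
  have [m0 mne _] := mk_props ha.
  have [m0b _ _] := mk_props hb.
  have := mne b; rewrite hab hb Ea Eb close_refl => /(_ isT isT) /eqP nab.
  have [d [hd Ed Md]] : exists d, [/\ d < size pi, nth 0 pi d = y + 4 & 2 <= mk pi d].
    case: (boolP (mk pi a == 1)) => [/eqP h|/eqP h].
      by exists b; split => //; slia.
    by exists a; split => //; slia.
  case: (boolP (mk pi d == 2)) => [/eqP h|/eqP h]; first by exists d.
  apply: (Hlift d) => //; slia.
have hsM : sorted geq (marked_parts 2 pi).
  have hsub : subseq (marked_parts 2 pi) pi.
    rewrite /marked_parts.
    rewrite -[X in subseq _ X](@unzip1_zip _ _ pi (gg_marks pi)) ?size_gg //.
    by apply: map_subseq; apply: filter_subseq.
  apply: (subseq_sorted _ hsub); first by move=> u v w h1 h2; apply: leq_trans h2 h1.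
  by case/andP: Hpart.
have huM : uniq (marked_parts 2 pi).
  rewrite /marked_parts map_inj_in_uniq.
    apply: filter_uniq; apply/(uniqP (0,0)) => u v.
    rewrite !inE size_zip size_gg minnn => hu hv.
    rewrite !nth_zip ?size_gg // => -[E1 E2].
    case: (ltngtP u v) => // huv.
      have [_ mne _] := mk_props hu.
      have := mne v; rewrite huv hv E1 close_refl /mk E2 eqxx; by move=> /(_ isT isT).
    have [_ mne _] := mk_props hv.
    have := mne u; rewrite huv hu -E1 close_refl /mk E2 eqxx; by move=> /(_ isT isT).
  move=> [u1 u2] [v1 v2]; rewrite !mem_filter /= => /andP[/eqP -> _] /andP[/eqP -> _] /= -> //.
have xM : y + 4 \in (marked_parts 2 pi) by rewrite -Ec2; apply: Mmem.
have hsMn : forall i j, i <= j -> j < size (marked_parts 2 pi) -> nth 0 (marked_parts 2 pi) j <= nth 0 (marked_parts 2 pi) i.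
  move=> i j hij hj.
  apply: (sorted_leq_nth (leT := geq) _ _ 0 hsM) => //; rewrite ?inE; try slia.
    by move=> u v w h1 h2; apply: leq_trans h2 h1.
  by move=> u; apply: leqnn.
have hp1M : p0.+1 <= size (marked_parts 2 pi) by slia.
have EyM : nth 0 (marked_parts 2 pi) p0 = y by [].
set idx := index (y + 4) (marked_parts 2 pi).
have hidx : idx < size (marked_parts 2 pi) by rewrite index_mem.
have Eidx : nth 0 (marked_parts 2 pi) idx = y + 4 by rewrite nth_index.
have hidp : idx < p0.
  rewrite ltnNge; apply/negP => h; have := hsMn _ _ h hidx; rewrite Eidx EyM; slia.
have [p00 Ep00] : exists p00, p0 = p00.+1 by exists p0.-1; lia.
set w := nth 0 (marked_parts 2 pi) p00.
have hw1 : w <= y + 4 by rewrite -Eidx; apply: hsMn; slia.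
have hw2 : y <= w by rewrite -EyM; apply: hsMn; slia.
have hw3 : w != y.
  by rewrite -EyM /w nth_uniq //; slia.
have hwin : p00 < size (marked_parts 2 pi) by slia.
have [jw [hjw Ejw Mjw]] := memM w (mem_nth 0 hwin).
have Ew : w = y + 4.
  have [n1 n3] := Hno jw hjw.
  case: (boolP (w == y + 2)) => [/eqP e2|/eqP ne2].
    have := H3m jw hjw; rewrite Ejw e2 => /(_ erefl); slia.
  move/eqP: hw3; move: ne2; slia.
have Eq2 : pi2 pi p0 = y + 4 by rewrite /pi2 Ep00 -Ew.
have Hstq : start_type pi p0 = s_3.
  have h1 : 0 < p0 <= start_l pi by slia.
  have h2 : p0 <= Nmark 2 pi by slia.
  have [prev E] := @st_nth pi p0 h1 h2.
  rewrite E Eq2; apply: step_s3'.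
  - apply/negP => /inZP[e [he Ee _]]; have [_ n3] := Hno e he; apply: n3; rewrite Ee; slia.
  - apply/negP => /inZP[e [he Ee Me]]; have := H3m e he; rewrite Ee Me; slia.
  - apply/negP => /inZP[e [he Ee Me]].
    have hec : e < c1.
      rewrite ltnNge; apply/negP => hle; have := Hs _ _ hle he; rewrite Ee Ec1; slia.
    have [_ mne _] := mk_props he.
    have hcl : gg_close (y + 4 + 2) (y + 4) by rewrite close_even ?addKn // -addnA.
    have := mne c1; rewrite hec hc1 Ee Ec1 hcl.
    by rewrite Mc1 Me => /(_ isT isT).
  - by apply/inZP; exists c1.
apply: (Hmin p0); first by slia.
split; first by rewrite Eq2 Hpp Ey; slia.
move=> j /andP[hqj hjp].
case: (boolP (j == p0)) => [/eqP ->|/eqP hjq]; first by rewrite Hstq Hst.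
apply: Hsame; slia.
Qed.
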